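(* Assume the mixed-integer semidefinite program $$\min\{\langle C,X\rangle : \mathcal{A}(X)=b,\ X\succeq \mathbf{0},\ X_{ij}\in B_{ij}\ \forall (i,j)\in\mathcal{J}\}\qquad(\mathrm{MISDP})$$ is feasible with bounded feasible set $\mathcal{F}_{MISDP}$ and optimal value $z_{MISDP}$. Let $\mathcal{F}_{SDP}=\{X:\mathcal{A}(X)=b,\ X\succeq\mathbf{0},\ l_{ij}\le X_{ij}\le u_{ij}\ \forall(i,j)\in\mathcal{J}\}$ with $z_{SDP}=\min\{\langle C,X\rangle: X\in\mathcal{F}_{SDP}\}$, and $\mathcal{F}_{LD}=\{X:\mathcal{A}_1(X)=b_1,\ X\succeq\mathbf{0},\ X\in\mathrm{conv}(P)\}$ with $z_{LD}=\min\{\langle C,X\rangle: X\in\mathcal{F}_{LD}\}$. Let $\chi^*_{MISDP}$ and $\chi^*_{LD}$ be the sets of optimal solutions of (MISDP) and of $\min\{\langle C,X\rangle:X\in\mathcal{F}_{LD}\}$, respectively. Then (i) $z_{LD}=z_{MISDP}$ if and only if $-C\in\mathcal{N}_{\mathcal{F}_{LD}}(X^* )$ for all $X^*\in\chi^*_{MISDP}$; (ii) $z_{SDP}=z_{LD}$ if and only if $-C\in\mathcal{N}_{\mathcal{F}_{SDP}}(X^* )$ for all $X^*\in\chi^*_{LD}$.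
   Context: $\mathcal{S}^n$ denotes the real symmetric $n\times n$ matrices with $\langle X,Y\rangle=\mathrm{tr}(XY)$; $X\succeq\mathbf{0}$ means positive semidefinite. $C\in\mathcal{S}^n$, $b\in\mathbb{R}^m$, $\mathcal{A}:\mathcal{S}^n\to\mathbb{R}^m$ linear with $\mathcal{A}(X)_i=\langle A_i,X\rangle$. $\mathcal{J}\subseteq[n]\times[n]$ and for $(i,j)\in\mathcal{J}$, $B_{ij}\subseteq\mathbb{Z}$ is a finite set with smallest element $l_{ij}$ and largest element $u_{ij}$. The constraints $\mathcal{A}(X)=b$ are split into $\mathcal{A}_1(X)=b_1$ ($b_1\in\mathbb{R}^{m_1}$) and $\mathcal{A}_2(X)=b_2$, and $P=\{X\in\mathcal{S}^n:\mathcal{A}_2(X)=b_2,\ X_{ij}\in B_{ij}\ \forall(i,j)\in\mathcal{J}\}$, assumed bounded. (The value $z_{LD}$ coincides with the Lagrangian dual value $\sup_{S\succeq\mathbf{0},\lambda}\min_{X\in P}\{\langle C,X\rangle-\langle S,X\rangle+\lambda^\top(\mathcal{A}_1(X)-b_1)\}$.) For a convex set $K\subseteq\mathcal{S}^n$ and $X\in K$, the normal cone is $\mathcal{N}_K(X)=\{Z\in\mathcal{S}^n:\langle Z,X\rangle\ge\langle Z,Y\rangle\ \forall Y\in K\}$. *)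

(* Defs.v *)
From mathcomp Require Import all_boot all_order all_algebra.
From mathcomp Require Import classical_sets reals constructive_ereal ereal.
Set Implicit Arguments. Unset Strict Implicit. Unset Printing Implicit Defensive.
Import Order.TTheory GRing.Theory Num.Theory.
Local Open Scope ring_scope.
Local Open Scope classical_set_scope.

Section MISDP.
Variables (R : realType) (n : nat).
Notation mat := 'M[R]_n.

Definition inner (X Y : mat) : R := \tr (X *m Y).

Definition symm (X : mat) : Prop := X^T = X.

Definition psd (X : mat) : Prop :=
  symm X /\ forall v : 'cV[R]_n, 0 <= (v^T *m X *m v) 0 0.

Definition lin_sat (m : nat) (A : 'I_m -> mat) (b : 'I_m -> R) (X : mat) : Prop :=
  forall i, inner (A i) X = b i.

Definition int_sat (J : {set 'I_n * 'I_n}) (B : 'I_n -> 'I_n -> seq int)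
  (X : mat) : Prop :=
  forall i j, (i, j) \in J -> exists2 z : int, z \in B i j & X i j = z%:~R.

Definition box_sat (J : {set 'I_n * 'I_n}) (l u : 'I_n -> 'I_n -> int)
  (X : mat) : Prop :=
  forall i j, (i, j) \in J -> (l i j)%:~R <= X i j <= (u i j)%:~R.

Definition conv (S : set mat) : set mat :=
  [set X | exists k (w : 'I_k -> R) (Y : 'I_k -> mat),
      [/\ forall i, 0 <= w i, \sum_(i < k) w i = 1, forall i, S (Y i)
        & X = \sum_(i < k) w i *: Y i]].

Definition bounded (S : set mat) : Prop :=
  exists M : R, forall X, S X -> forall i j, `|X i j| <= M.

Definition optval (C : mat) (S : set mat) : \bar R :=
  ereal_inf [set (inner C X)%:E | X in S].

Definition argmins (C : mat) (S : set mat) : set mat :=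
  [set X | S X /\ forall Y, S Y -> inner C X <= inner C Y].

Definition normal_cone (K : set mat) (X : mat) : set mat :=
  [set Z | symm Z /\ forall Y, K Y -> inner Z Y <= inner Z X].

Section Sets.
Variables (m1 m2 : nat) (A1 : 'I_m1 -> mat) (b1 : 'I_m1 -> R)
  (A2 : 'I_m2 -> mat) (b2 : 'I_m2 -> R) (J : {set 'I_n * 'I_n})
  (B : 'I_n -> 'I_n -> seq int) (l u : 'I_n -> 'I_n -> int).

Definition F_MISDP : set mat :=
  [set X | [/\ lin_sat A1 b1 X, lin_sat A2 b2 X, psd X & int_sat J B X]].

Definition F_SDP : set mat :=
  [set X | [/\ lin_sat A1 b1 X, lin_sat A2 b2 X, psd X & box_sat J l u X]].

Definition P_set : set mat :=
  [set X | [/\ symm X, lin_sat A2 b2 X & int_sat J B X]].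

Definition F_LD : set mat :=
  [set X | [/\ lin_sat A1 b1 X, psd X & conv P_set X]].

End Sets.
End MISDP.

(* Main.v *)
Require Import Defs.
From mathcomp Require Import all_boot all_order all_algebra.
From mathcomp Require Import classical_sets reals constructive_ereal ereal.
From mathcomp Require Import boolp topology normedtype derive.
Import Order.TTheory GRing.Theory Num.Theory.
Import numFieldTopology.Exports numFieldNormedType.Exports.
Local Open Scope ring_scope.
Local Open Scope classical_set_scope.
Set Implicit Arguments. Unset Strict Implicit.

Section Alg.
Variables (R : realType) (n : nat).
Notation mat := 'M[R]_n.

Lemma inner_sum k (A : mat) (w : 'I_k -> R) (Y : 'I_k -> mat) :
  inner A (\sum_(i < k) w i *: Y i) = \sum_(i < k) w i * inner A (Y i).
Proof.
rewrite /inner mulmx_sumr raddf_sum; apply: eq_bigr => i _.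
by rewrite -scalemxAr; apply: mxtraceZ. Qed.

Lemma innerN (A X : mat) : inner (- A) X = - inner A X.
Proof. by rewrite /inner mulNmx; apply: (raddfN (@mxtrace _ n)). Qed.

Lemma symmN (A : mat) : symm A -> symm (- A).
Proof. by rewrite /symm => h; rewrite linearN /= h. Qed.

Lemma optval_le (C : mat) (S T : set mat) : S `<=` T -> (optval C T <= optval C S)%E.
Proof.
move=> ST; apply: le_ereal_inf => _ [X SX <-]; exists X => //; exact: ST.
Qed.

Lemma optval_argmin (C : mat) (S : set mat) X : argmins C S X ->
  optval C S = (inner C X)%:E.
Proof.
move=> [SX Xmin]; apply/eqP; rewrite eq_le; apply/andP; split.
  by apply: ereal_inf_lbound; exists X.
by apply: le_ereal_inf_tmp => _ [Y SY <-]; rewrite lee_fin; apply: Xmin.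
Qed.

Lemma optval_lb (C : mat) (S : set mat) Y : S Y ->
  (optval C S <= (inner C Y)%:E)%E.
Proof. by move=> SY; apply: ereal_inf_lbound; exists Y. Qed.

Lemma optval_ge (C : mat) (S : set mat) (r : R) :
  (forall Y, S Y -> r <= inner C Y) -> (r%:E <= optval C S)%E.
Proof. by move=> h; apply: le_ereal_inf_tmp => _ [Y SY <-]; rewrite lee_fin; apply: h. Qed.

End Alg.
Section Incl.
Variables (R : realType) (n m1 m2 : nat).
Notation mat := 'M[R]_n.
Variables (A1 : 'I_m1 -> mat) (b1 : 'I_m1 -> R)
  (A2 : 'I_m2 -> mat) (b2 : 'I_m2 -> R)
  (J : {set 'I_n * 'I_n}) (B : 'I_n -> 'I_n -> seq int)
  (l u : 'I_n -> 'I_n -> int).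

Lemma FM_sub_FL : F_MISDP A1 b1 A2 b2 J B `<=` F_LD A1 b1 A2 b2 J B.
Proof.
move=> X [h1 h2 hp hi]; split => //.
exists 1%N, (fun _ => 1), (fun _ => X); split.
- by move=> _; exact: ler01.
- by rewrite big_ord1.
- by move=> _; split => //; case: hp.
- by rewrite big_ord1 scale1r.
Qed.

Hypothesis hB : forall i j, (i, j) \in J ->
     [/\ l i j \in B i j, u i j \in B i j
       & forall z, z \in B i j -> ((l i j <= z) && (z <= u i j))%R].

Lemma FL_sub_FS : F_LD A1 b1 A2 b2 J B `<=` F_SDP A1 b1 A2 b2 J l u.
Proof.
move=> X [h1 hp [k [w [Y [w0 w1 YP eX]]]]]; split.
- exact: h1.
- rewrite eX; move=> i; rewrite inner_sum.
  rewrite (eq_bigr (fun k => w k * b2 i)); last first.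
    by move=> t _; have [_ h _] := YP t; rewrite h.
  by rewrite -mulr_suml w1 mul1r.
- exact: hp.
- rewrite eX; move=> i j hij; have [_ _ hz] := hB hij.
  have hY t : (l i j)%:~R <= Y t i j <= (u i j)%:~R.
    have [_ _ hi] := YP t; have [z zB ->] := hi i j hij.
    by have /andP[a b] := hz z zB; rewrite !ler_int a b.
  rewrite summxE.
  rewrite (eq_bigr (fun t => w t * Y t i j)); last by move=> t _; rewrite mxE.
  have el : (l i j)%:~R = \sum_(t < k) w t * (l i j)%:~R :> R.
    by rewrite -mulr_suml w1 mul1r.
  have eu : (u i j)%:~R = \sum_(t < k) w t * (u i j)%:~R :> R.
    by rewrite -mulr_suml w1 mul1r.
  rewrite el eu; apply/andP; split; apply: ler_sum => t _;
    apply: ler_wpM2l; (try exact: w0); by case/andP: (hY t).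
Qed.
End Incl.

Section Topo.
Variable R : realType.

Lemma mx_cont (T : topologicalType) p q (f : T -> 'M[R]_(p, q)) :
  (forall i j, continuous (fun t => f t i j)) -> continuous f.
Proof.
move=> fc x; apply/cvgrPdist_lt => e e0.
have H : \forall t \near x, forall ij : 'I_p * 'I_q,
    `|f x ij.1 ij.2 - f t ij.1 ij.2| < e.
  apply: filter_forall => ij.
  have hh := @cvgr_dist_lt _ _ _ _ _ (fun t => f t ij.1 ij.2) (f x ij.1 ij.2) (fc ij.1 ij.2 x) e e0. exact: hh.
apply: filterS H => t Ht.
have -> : `|f x - f t| = mx_norm (f x - f t) by []. rewrite mx_normrE.
elim/big_ind: _ => //.
  by move=> a b ha hb; rewrite gt_max ha hb.
by move=> ij _; rewrite !mxE; exact: Ht.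
Qed.

Lemma sum_cont (T : topologicalType) (I : Type) (r : seq I) (F : I -> T -> R) :
  (forall i, continuous (F i)) -> continuous (fun t => \sum_(i <- r) F i t).
Proof.
move=> h x; elim: r => [|a r IH].
  have -> : (fun t => \sum_(i <- [::]) F i t) = (fun=> 0) by apply: funext => t; rewrite big_nil.
  exact: cst_continuous.
have -> : (fun t => \sum_(i <- a :: r) F i t) =
   (fun t => F a t + \sum_(i <- r) F i t).
  by apply: funext => t; rewrite big_cons.
exact: continuousD (h a x) IH.
Qed.

Lemma mul_cont (T : topologicalType) (f g : T -> R) :
  continuous f -> continuous g -> continuous (fun t => f t * g t).
Proof. by move=> hf hg x; have := continuousM (hf x) (hg x). Qed.

Lemma inner_cont n (A : 'M[R]_n) : continuous (inner A).
Proof.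
have -> : inner A = (fun X => \sum_(i < n) \sum_(j < n) A i j * X j i).
  apply: funext => X; rewrite /inner /mxtrace; apply: eq_bigr => i _.
  by rewrite mxE.
apply: sum_cont => i; apply: sum_cont => j.
apply: mul_cont; [exact: cst_continuous | exact: coord_continuous].
Qed.

Lemma quad_cont n (v : 'cV[R]_n) :
  continuous (fun X : 'M[R]_n => (v^T *m X *m v) 0 0).
Proof.
have -> : (fun X : 'M[R]_n => (v^T *m X *m v) 0 0) =
   (fun X => \sum_(j < n) (\sum_(i < n) v^T 0 i * X i j) * v j 0).
  apply: funext => X; rewrite mxE; apply: eq_bigr => j _.
  by rewrite mxE.
apply: sum_cont => j; apply: mul_cont; last exact: cst_continuous.
apply: sum_cont => i.
apply: mul_cont; [exact: cst_continuous | exact: coord_continuous].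
Qed.

Lemma closed_forall (T : topologicalType) (I : Type) (P : I -> set T) :
  (forall i, closed (P i)) -> closed [set x | forall i, P i x].
Proof.
move=> h.
have -> : [set x | forall i, P i x] = \bigcap_(i in setT) P i.
  by apply/seteqP; split => x /= hx i //; apply: hx.
exact: closed_bigI.
Qed.

Lemma closed_impl (T : topologicalType) (b : bool) (P : set T) :
  closed P -> closed [set x | b -> P x].
Proof.
case: b => h.
  have -> : [set x | true -> P x] = P by apply/seteqP; split => x /=; auto.
  exact: h.
have -> : [set x : T | false -> P x] = setT by apply/seteqP; split => x //=.
exact: closedT.
Qed.

Lemma closed_ex_seq (T : topologicalType) (I : eqType) (s : seq I) (P : I -> set T) :
  (forall i, closed (P i)) -> closed [set x | exists2 i, i \in s & P i x].
Proof.
move=> h; elim: s => [|a s IH].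
  have -> : [set x : T | exists2 i, i \in [::] & P i x] = set0.
    by apply/seteqP; split => x //= [].
  exact: closed0.
have -> : [set x : T | exists2 i, i \in a :: s & P i x] =
   P a `|` [set x | exists2 i, i \in s & P i x].
  apply/seteqP; split => x /=.
    move=> [i]; rewrite in_cons => /orP[/eqP -> | iS] Px; [by left | by right; exists i].
  case=> [Pa | [i iS Pi]]; first by exists a => //; rewrite mem_head.
  by exists i => //; rewrite in_cons iS orbT.
exact: closedU.
Qed.

Lemma closed_eqf (T : topologicalType) (f g : T -> R) :
  continuous f -> continuous g -> closed [set x | f x = g x].
Proof.
move=> hf hg.
have -> : [set x | f x = g x] = (fun x => f x - g x) @^-1` [set y | y = 0].
  apply/seteqP; split => x /=; first by move=> ->; rewrite subrr.
  by move/eqP; rewrite subr_eq0 => /eqP.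
apply: preimage_closed; last exact: closed_eq.
by move=> x _; have := continuousB (hf x) (hg x).
Qed.

Lemma closed_ge0 (T : topologicalType) (f : T -> R) :
  continuous f -> closed [set x | 0 <= f x].
Proof.
move=> hf; apply: (@preimage_closed _ _ f [set y | 0 <= y]); last exact: closed_ge.
by move=> x _; apply: hf.
Qed.

Lemma closed_pre (T U : topologicalType) (f : T -> U) (D : set U) :
  continuous f -> closed D -> closed [set x | D (f x)].
Proof. by move=> hf; apply: preimage_closed => x _; apply: hf. Qed.

Lemma rV_min d (S : set 'rV[R]_d) (f : 'rV[R]_d -> R) :
  S !=set0 -> closed S -> (exists M : R, forall v, S v -> forall k, `|v ord0 k| <= M) ->
  continuous f -> exists2 v, S v & forall w, S w -> f v <= f w.
Proof.
move=> S0 Scl [M hM] fc.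
have bS : bounded_set S.
  rewrite /bounded_near.
  have M'r : Num.max M 0 \is Num.real by apply: num_real.
  apply: filterS (nbhs_pinfty_ge M'r) => r hr v Sv /=.
  have -> : `|v| = mx_norm v by []. rewrite mx_normrE.
  elim/big_ind: _ => //.
    by apply: le_trans hr; rewrite le_max lexx orbT.
    by move=> a b ha hb; rewrite ge_max ha hb.
  move=> ij _; apply: le_trans hr; rewrite le_max; apply/orP; left.
  by rewrite (ord1 ij.1); apply: hM.
have cS := bounded_closed_compact bS Scl.
have [v vS vmin] := compact_EVT_min S0 cS (@continuous_subspaceT _ _ S f fc).
exists v; first by move: vS; rewrite inE.
by move=> w Sw; apply: vmin; rewrite inE.
Qed.

End Topo.

Section Closed.
Variables (R : realType) (n : nat).
Notation mat := 'M[R]_n.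

Lemma closed_and2 (T : topologicalType) (P Q : set T) :
  closed P -> closed Q -> closed [set x | P x /\ Q x].
Proof. exact: closedI. Qed.

Lemma closed_and3 (T : topologicalType) (P Q S : set T) :
  closed P -> closed Q -> closed S -> closed [set x | [/\ P x, Q x & S x]].
Proof.
move=> hP hQ hS.
have -> : [set x | [/\ P x, Q x & S x]] = P `&` (Q `&` S).
  by apply/seteqP; split => x /=; [case | case=> ? []].
by apply: closedI => //; apply: closedI.
Qed.

Lemma closed_and4 (T : topologicalType) (P Q S U : set T) :
  closed P -> closed Q -> closed S -> closed U ->
  closed [set x | [/\ P x, Q x, S x & U x]].
Proof.
move=> hP hQ hS hU.
have -> : [set x | [/\ P x, Q x, S x & U x]] = P `&` (Q `&` (S `&` U)).
  by apply/seteqP; split => x /=; [case | case=> ? [? []]].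
by apply: closedI => //; apply: closedI => //; apply: closedI.
Qed.

Lemma closed_linsat m (A : 'I_m -> mat) (b : 'I_m -> R) :
  closed [set X | lin_sat A b X].
Proof.
apply: (@closed_forall _ _ (fun i => [set X | inner (A i) X = b i])) => i.
apply: closed_eqf; [exact: inner_cont | exact: cst_continuous].
Qed.

Lemma closed_symm : closed [set X : mat | symm X].
Proof.
have -> : [set X : mat | symm X] = [set X | forall i j, X j i = X i j].
  apply/seteqP; split => X /=.
    by move=> h i j; rewrite -[in RHS]h mxE.
  by move=> h; apply/matrixP => i j; rewrite mxE h.
apply: closed_forall => i; apply: closed_forall => j.
by apply: closed_eqf; apply: coord_continuous.
Qed.

Lemma closed_psd : closed [set X : mat | psd X].
Proof.
apply: closed_and2; first exact: closed_symm.
apply: (@closed_forall _ _ (fun v => [set X : mat | 0 <= (v^T *m X *m v) 0 0])) => v.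
apply: closed_ge0; exact: quad_cont.
Qed.

Lemma closed_intsat J (B : 'I_n -> 'I_n -> seq int) :
  closed [set X : mat | int_sat J B X].
Proof.
apply: (@closed_forall _ _ (fun i => [set X : mat | forall j, (i, j) \in J ->
   exists2 z : int, z \in B i j & X i j = z%:~R])) => i.
apply: (@closed_forall _ _ (fun j => [set X : mat | (i, j) \in J ->
   exists2 z : int, z \in B i j & X i j = z%:~R])) => j.
apply: closed_impl; apply: closed_ex_seq => z.
apply: closed_eqf; [exact: coord_continuous | exact: cst_continuous].
Qed.

End Closed.

Lemma vec_mx_cont (R : realType) p q : continuous (@vec_mx R p q).
Proof.
apply: mx_cont => i j.
have -> : (fun t : 'rV[R]_(p * q) => vec_mx t i j) = (fun t => t 0 (mxvec_index i j)).
  by apply: funext => t; rewrite mxE.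
exact: coord_continuous.
Qed.

Lemma exists_argmin_FM (R : realType) (n m1 m2 : nat) (C : 'M[R]_n)
  (A1 : 'I_m1 -> 'M[R]_n) (b1 : 'I_m1 -> R)
  (A2 : 'I_m2 -> 'M[R]_n) (b2 : 'I_m2 -> R)
  (J : {set 'I_n * 'I_n}) (B : 'I_n -> 'I_n -> seq int) :
  F_MISDP A1 b1 A2 b2 J B !=set0 ->
  bounded (F_MISDP A1 b1 A2 b2 J B) ->
  exists X, argmins C (F_MISDP A1 b1 A2 b2 J B) X.
Proof.
move=> [X0 hX0] [M hM].
set FM := F_MISDP A1 b1 A2 b2 J B.
have clFM : closed FM.
  apply: closed_and4; [exact: closed_linsat | exact: closed_linsat |
    exact: closed_psd | exact: closed_intsat].
have ne : [set v | FM (vec_mx v)] !=set0 by exists (mxvec X0); rewrite /= mxvecK.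
have cl : closed [set v | FM (vec_mx v)] by exact: closed_pre (@vec_mx_cont R n n) clFM.
have bd : exists M0 : R, forall v : 'rV[R]_(n * n), [set v | FM (vec_mx v)] v ->
    forall k, `|v ord0 k| <= M0.
  exists M => v Sv k; case: (mxvec_indexP k) => i j.
  by have := hM _ Sv i j; rewrite mxE.
have fc : continuous (fun v : 'rV[R]_(n * n) => inner C (vec_mx v)).
  by move=> x; apply: continuous_comp; [exact: vec_mx_cont | exact: inner_cont].
have [v Sv vmin] := rV_min ne cl bd fc.
exists (vec_mx v); split => // Y FY.
by have := vmin (mxvec Y); rewrite /= mxvecK; apply.
Qed.

Section Cara.
Variables (R : realType) (n : nat).
Notation mat := 'M[R]_n.
Variable S : set mat.

Definition rep k (X : mat) := exists (w : 'I_k -> R) (Y : 'I_k -> mat),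
  [/\ forall i, 0 <= w i, \sum_(i < k) w i = 1, forall i, S (Y i)
    & X = \sum_(i < k) w i *: Y i].

Lemma rep_up k X : rep k X -> rep k.+1 X.
Proof.
case: k => [|k] [w [Y [w0 w1 YS eX]]].
  by exfalso; move: w1; rewrite big_ord0 => /eqP; rewrite eq_sym oner_eq0.
exists (fun i : 'I_k.+2 => if (i < k.+1)%N then w (inord i) else 0),
  (fun i => Y (inord i)); split.
- by move=> i; case: ifP => _ //.
- rewrite big_ord_recr /= (ltnn k.+1) addr0 -w1; apply: eq_bigr => i _.
  rewrite (ltn_ord i); congr w; apply: val_inj; rewrite /= inordK //.
- by move=> i; exact: YS.
- rewrite eX [RHS]big_ord_recr /= (ltnn k.+1) scale0r addr0; apply: eq_bigr => i _.
  have -> : (inord (widen_ord (leqnSn k.+1) i) : 'I_k.+1) = i.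
    by apply: val_inj; rewrite /= inordK.
  by rewrite (ltn_ord i).
Qed.

Lemma rep_down k X : ((n * n).+1 <= k)%N -> rep k.+1 X -> rep k X.
Proof.
move=> hk [w [Y [w0 w1 YS eX]]].
pose Vm : 'M[R]_(k.+1, n * n) := \matrix_(i < k.+1) mxvec (Y i).
pose Mx := row_mx (const_mx 1 : 'cV[R]_k.+1) Vm.
have nf : ~~ row_free Mx.
  rewrite /row_free neq_ltn; apply/orP; left.
  by apply: leq_ltn_trans (rank_leq_col _) _; rewrite ltnS add1n.
have knz : kermx Mx != 0 by rewrite kermx_eq0.
have : [exists ij : 'I_k.+1 * 'I_k.+1, kermx Mx ij.1 ij.2 != 0].
  apply: contraR knz => /existsPn h; apply/eqP/matrixP => i j.
  by move: (h (i, j)); rewrite negbK /= => /eqP ->; rewrite mxE.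
case/existsP => -[i0 j0] /= nz.
pose mu := row i0 (kermx Mx).
have muM : mu *m Mx = 0 by rewrite /mu -row_mul mulmx_ker row0.
have nz' : mu 0 j0 != 0 by rewrite mxE.
move: muM; rewrite mul_mx_row => /eqP; rewrite row_mx_eq0 => /andP[/eqP m1 /eqP m2].
have s0 : \sum_(i < k.+1) mu 0 i = 0.
  transitivity ((mu *m (const_mx 1 : 'cV[R]_k.+1)) 0 0); last by rewrite m1 mxE.
  by rewrite mxE; apply: eq_bigr => i _; rewrite !mxE mulr1.
have sY : \sum_(i < k.+1) mu 0 i *: Y i = 0.
  apply/matrixP => a b; rewrite summxE [RHS]mxE.
  transitivity ((mu *m Vm) 0 (mxvec_index a b)); last by rewrite m2 mxE.
  rewrite mulmx_sum_row summxE; apply: eq_bigr => i _.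
  by rewrite !mxE mxvecE.
have [ip hp] : exists i, 0 < mu 0 i.
  apply/existsP; apply: contraR nz' => /existsPn h; apply/eqP.
  have h' : forall i, 0 <= - mu 0 i.
    by move=> i; rewrite oppr_ge0; have := h i; rewrite -real_leNgt ?num_real.
  have := @psumr_eq0P _ _ xpredT (fun i => - mu 0 i) (fun i _ => h' i).
  rewrite sumrN s0 oppr0 => /(_ erefl j0 isT) /eqP; rewrite oppr_eq0 => /eqP.
  done.
case: (@arg_minP _ _ _ ip (fun i => 0 < mu 0 i) (fun i => w i / mu 0 i) hp) => i1 hi1 hmin.
set t := w i1 / mu 0 i1.
have t0 : 0 <= t by rewrite divr_ge0 // ltW.
pose w' i := w i - t * mu 0 i.
have w'0 i : 0 <= w' i.
  rewrite subr_ge0; have [hm|hm] := ltrP 0 (mu 0 i).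
    by rewrite -ler_pdivlMr //; apply: hmin.
  by apply: le_trans (w0 i); apply: mulr_ge0_le0.
have w'1 : w' i1 = 0.
  by rewrite /w' /t divfK ?subrr // gt_eqF.
have sw' : \sum_(i < k.+1) w' i = 1.
  by rewrite sumrB -mulr_sumr s0 mulr0 subr0.
have eX' : X = \sum_(i < k.+1) w' i *: Y i.
  rewrite eX; apply/eqP; rewrite eq_sym -subr_eq0 -sumrB.
  rewrite (eq_bigr (fun i => - (t *: (mu 0 i *: Y i)))); last first.
    by move=> i _; rewrite /w' scalerBl scalerA addrAC subrr add0r.
  by rewrite sumrN -scaler_sumr sY scaler0 oppr0.
exists (fun j => w' (lift i1 j)), (fun j => Y (lift i1 j)); split.
- by move=> j; apply: w'0.
- by move: sw'; rewrite (bigD1_ord i1) //= w'1 add0r.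
- by move=> j; apply: YS.
- by rewrite eX' (bigD1_ord i1) //= w'1 scale0r add0r.
Qed.

Lemma caratheodory X : conv S X -> rep (n * n).+1 X.
Proof.
case=> k hk; set N := (n * n).+1.
case: (leqP k N) => h.
  have : forall d k, (k + d = N)%N -> rep k X -> rep N X.
    elim=> [|d IH] k' e hk'; first by rewrite -e addn0.
    by apply: (IH k'.+1); [rewrite addSn -addnS | exact: rep_up].
  by move=> /(_ (N - k)%N k (subnKC h) hk).
have : forall d k, k = (N + d)%N -> rep k X -> rep N X.
  elim=> [|d IH] k' e hk'; first by rewrite e addn0 in hk'.
  apply: (IH (N + d)%N) => //; apply: rep_down; first by rewrite leq_addr.
  by rewrite -addnS -e.
by move=> /(_ (k - N)%N k (esym (subnKC (ltnW h))) hk).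
Qed.

End Cara.

Section ExFL.
Variables (R : realType) (n m1 m2 : nat) (C : 'M[R]_n)
  (A1 : 'I_m1 -> 'M[R]_n) (b1 : 'I_m1 -> R)
  (A2 : 'I_m2 -> 'M[R]_n) (b2 : 'I_m2 -> R)
  (J : {set 'I_n * 'I_n}) (B : 'I_n -> 'I_n -> seq int).
Notation mat := 'M[R]_n.
Let N := (n * n).+1.
Let D := (N + N * (n * n))%N.
Let P := P_set A2 b2 J B.

Let wt (v : 'rV[R]_D) (k : 'I_N) : R := v ord0 (lshift (N * (n * n)) k).
Let Yk (v : 'rV[R]_D) (k : 'I_N) : mat :=
  \matrix_(i, j) v ord0 (rshift N (mxvec_index k (mxvec_index i j))).
Let Phi (v : 'rV[R]_D) : mat := \sum_(k < N) wt v k *: Yk v k.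
Let TL := [set v | [/\ forall k, 0 <= wt v k, \sum_(k < N) wt v k = 1,
   forall k, P (Yk v k) & (lin_sat A1 b1 (Phi v) /\ psd (Phi v))]].

Lemma Yk_cont k : continuous (fun v => Yk v k).
Proof.
apply: mx_cont => i j.
have -> : (fun v => Yk v k i j) =
    (fun v : 'rV[R]_D => v ord0 (rshift N (mxvec_index k (mxvec_index i j)))).
  by apply: funext => v; rewrite mxE.
exact: coord_continuous.
Qed.

Lemma Phi_cont : continuous Phi.
Proof.
apply: mx_cont => i j.
have -> : (fun v => Phi v i j) = (fun v => \sum_(k < N) wt v k *
    v ord0 (rshift N (mxvec_index k (mxvec_index i j)))).
  by apply: funext => v; rewrite summxE; apply: eq_bigr => k _; rewrite !mxE.
apply: sum_cont => k; apply: mul_cont; exact: coord_continuous.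
Qed.

Lemma encode (w : 'I_N -> R) (Y : 'I_N -> mat) :
  exists v, (forall k, wt v k = w k) /\ (forall k, Yk v k = Y k).
Proof.
exists (row_mx (\row_k w k) (mxvec (\matrix_(k, r) mxvec (Y k) 0 r))); split.
  by move=> k; rewrite /wt row_mxEl mxE.
move=> k; apply/matrixP => i j.
by rewrite mxE row_mxEr mxvecE mxE mxvecE.
Qed.

Lemma rep_TL X : rep P N X -> lin_sat A1 b1 X -> psd X ->
  exists2 v, TL v & Phi v = X.
Proof.
move=> [w [Y [w0 w1 YP eX]]] h1 hp.
have [v [hw hY]] := encode w Y.
have ePhi : Phi v = X.
  by rewrite eX /Phi; apply: eq_bigr => k _; rewrite hw hY.
exists v => //; split.
- by move=> k; rewrite hw.
- by rewrite -w1; apply: eq_bigr => k _; rewrite hw.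
- by move=> k; rewrite hY.
- by rewrite ePhi.
Qed.

Lemma exists_argmin_FL' :
  F_MISDP A1 b1 A2 b2 J B !=set0 ->
  bounded P ->
  exists X, argmins C (F_LD A1 b1 A2 b2 J B) X.
Proof.
move=> [X0 hX0] [M hM].
have hL0 := FM_sub_FL hX0.
have ne : TL !=set0.
  case: hL0 => h1 hp hc.
  have [v Tv _] := rep_TL (caratheodory hc) h1 hp.
  by exists v.
have clP : closed P.
  apply: closed_and3; [exact: closed_symm | exact: closed_linsat |
    exact: closed_intsat].
have cl : closed TL.
  apply: closed_and4.
  - apply: (@closed_forall _ _ (fun k => [set v | 0 <= wt v k])) => k.
    by apply: closed_ge0; exact: coord_continuous.
  - apply: closed_eqf; last exact: cst_continuous.
    by apply: sum_cont => k; exact: coord_continuous.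
  - apply: (@closed_forall _ _ (fun k => [set v | P (Yk v k)])) => k /=.
    exact: (@closed_pre _ _ (fun v => Yk v k) P (@Yk_cont k) clP).
  - apply: (@closed_pre _ _ Phi [set X | lin_sat A1 b1 X /\ psd X] Phi_cont).
    by apply: closed_and2; [exact: closed_linsat | exact: closed_psd].
have bd : exists M0 : R, forall v, TL v -> forall t, `|v ord0 t| <= M0.
  exists (Num.max 1 M) => v [w0 w1 YP _] t.
  rewrite -(splitK t); case: (split t) => [k|r] /=.
    have -> : v ord0 (lshift (N * (n * n)) k) = wt v k by [].
    rewrite ger0_norm ?w0 // le_max; apply/orP; left.
    rewrite -w1 (bigD1 k) //= lerDl; apply: sumr_ge0 => i _; exact: w0.
  case: (mxvec_indexP r) => k ij; case: (mxvec_indexP ij) => i j.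
  have -> : v ord0 (rshift N (mxvec_index k (mxvec_index i j))) = Yk v k i j.
    by rewrite mxE.
  by rewrite le_max; apply/orP; right; apply: hM.
have fc : continuous (fun v => inner C (Phi v)).
  by move=> x; apply: continuous_comp; [exact: Phi_cont | exact: inner_cont].
have [v Tv vmin] := rV_min ne cl bd fc.
case: (Tv) => w0 w1 YP [h1 hp].
exists (Phi v); split.
  split => //; exists N, (wt v), (Yk v); split => //.
move=> Y [hY1 hYp hYc].
have [v' Tv' <-] := rep_TL (caratheodory hYc) hY1 hYp.
exact: vmin.
Qed.

End ExFL.

Lemma exists_argmin_FL (R : realType) (n m1 m2 : nat) (C : 'M[R]_n)
  (A1 : 'I_m1 -> 'M[R]_n) (b1 : 'I_m1 -> R)
  (A2 : 'I_m2 -> 'M[R]_n) (b2 : 'I_m2 -> R)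
  (J : {set 'I_n * 'I_n}) (B : 'I_n -> 'I_n -> seq int) :
  F_MISDP A1 b1 A2 b2 J B !=set0 ->
  bounded (P_set A2 b2 J B) ->
  exists X, argmins C (F_LD A1 b1 A2 b2 J B) X.
Proof. exact: exists_argmin_FL'. Qed.

Unset Implicit Arguments. Set Strict Implicit.

Theorem theorem2 (R : realType) (n m1 m2 : nat) (C : 'M[R]_n)
  (A1 : 'I_m1 -> 'M[R]_n) (b1 : 'I_m1 -> R)
  (A2 : 'I_m2 -> 'M[R]_n) (b2 : 'I_m2 -> R)
  (J : {set 'I_n * 'I_n}) (B : 'I_n -> 'I_n -> seq int)
  (l u : 'I_n -> 'I_n -> int) :
  symm C ->
  (forall i, symm (A1 i)) ->
  (forall i, symm (A2 i)) ->
  (* l_ij and u_ij are the smallest and largest elements of B_ij *)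
  (forall i j, (i, j) \in J ->
     [/\ l i j \in B i j, u i j \in B i j
       & forall z, z \in B i j -> ((l i j <= z) && (z <= u i j))%R]) ->
  (* P is bounded *)
  bounded (P_set A2 b2 J B) ->
  (* (MISDP) is feasible with bounded feasible set *)
  F_MISDP A1 b1 A2 b2 J B !=set0 ->
  bounded (F_MISDP A1 b1 A2 b2 J B) ->
  let F_M := F_MISDP A1 b1 A2 b2 J B in
  let F_S := F_SDP A1 b1 A2 b2 J l u in
  let F_L := F_LD A1 b1 A2 b2 J B in
  (optval C F_L = optval C F_M <->
     (forall X, argmins C F_M X -> normal_cone F_L X (- C))) /\
  (optval C F_S = optval C F_L <->
     (forall X, argmins C F_L X -> normal_cone F_S X (- C))).
Proof.
move=> sC _ _ hB bP neM bM FM FS FL.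
have gen : forall (S T : set 'M[R]_n), S `<=` T -> (exists X, argmins C S X) ->
  (optval C T = optval C S <->
     (forall X, argmins C S X -> normal_cone T X (- C))).
  move=> S T ST [X0 hX0]; split.
    move=> e X hX; split; first exact: symmN.
    move=> Y TY; rewrite !innerN lerN2.
    have := optval_lb C TY; rewrite e (optval_argmin hX) lee_fin; exact.
  move=> h; rewrite (optval_argmin hX0); apply/eqP; rewrite eq_le; apply/andP; split.
    by have := optval_le C ST; rewrite (optval_argmin hX0).
  apply: optval_ge => Y TY; have [_ /(_ Y TY)] := h X0 hX0.
  by rewrite !innerN lerN2.
split.
- apply: gen; first exact: FM_sub_FL.
  exact: exists_argmin_FM.
- apply: gen; first exact: FL_sub_FS.
  exact: exists_argmin_FL.
Qed.
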